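(* Let $(A,\mathfrak m)$ be a local ring, $B$ a ring, $f : A \to B$ a ring homomorphism and $J$ a proper ideal of $B$ with $J \subseteq \mathrm{Rad}(B)$. Assume that $J \subseteq f(A)$ and $f(\mathrm{Reg}(A)) = \mathrm{Reg}(B)$. Then $A \bowtie^f J$ is a Prüfer ring if and only if $A$ is a Prüfer ring and $J = f(a)J$ for all $a \in \mathfrak m \setminus Z(A)$.
   Context: All rings are commutative with identity. For a ring homomorphism $f:A\to B$ and an ideal $J$ of $B$, $A \bowtie^f J := \{(a, f(a)+j) : a \in A, j \in J\}$, a subring of $A\times B$. $Z(R)$ is the set of zero-divisors of $R$, $\mathrm{Reg}(R)=R\setminus Z(R)$ the set of regular elements, and $\mathrm{Rad}(B)$ the Jacobson radical of $B$. An ideal is regular if it contains a regular element. A ring $R$ is a Prüfer ring if every finitely generated regular ideal of $R$ is invertible. *)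

(* Defs.v *)
From HB Require Import structures.
From mathcomp Require Import all_boot all_order all_algebra.
Set Implicit Arguments. Unset Strict Implicit. Unset Printing Implicit Defensive.
Import GRing.Theory.
Local Open Scope ring_scope.

Definition is_ideal (R : comNzRingType) (I : R -> Prop) : Prop :=
  [/\ I 0, (forall x y, I x -> I y -> I (x + y)) & (forall r x, I x -> I (r * x))].

Definition zero_divisor (R : comNzRingType) (x : R) : Prop :=
  exists y : R, y != 0 /\ x * y = 0.
Definition regular (R : comNzRingType) (x : R) : Prop := ~ zero_divisor x.

Definition maximal_ideal (R : comNzRingType) (M : R -> Prop) : Prop :=
  [/\ is_ideal M, ~ M 1 &
      forall I : R -> Prop, is_ideal I -> (forall x, M x -> I x) ->
        (forall x, I x <-> M x) \/ (forall x, I x)].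

Definition local_ring_with (R : comNzRingType) (m : R -> Prop) : Prop :=
  maximal_ideal m /\ forall M, maximal_ideal M -> forall x, M x <-> m x.

Definition jacobson (R : comNzRingType) (x : R) : Prop :=
  forall M : R -> Prop, maximal_ideal M -> M x.

Definition fin_gen (R : comNzRingType) (I : R -> Prop) : Prop :=
  exists (n : nat) (g : 'I_n -> R), (forall i, I (g i)) /\
    forall x, I x -> exists c : 'I_n -> R, x = \sum_(i < n) c i * g i.

Definition regular_ideal (R : comNzRingType) (I : R -> Prop) : Prop :=
  exists x, I x /\ regular x.

(* I is invertible: I (R : I) = R, computed in the total ring of quotients
   Q(R) = Reg(R)^{-1} R.  Since I (R : I) is contained in R, this means that
   1 = sum_i x_i y_i with y_i in I and x_i in (R : I); writing the x_i over a
   common regular denominator s, x_i = a_i / s, the condition x_i in (R : I)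
   reads  a_i * z in s R  for all z in I. *)
Definition invertible_ideal (R : comNzRingType) (I : R -> Prop) : Prop :=
  exists (s : R) (n : nat) (a y : 'I_n -> R),
    [/\ regular s, (forall i, I (y i)),
        (forall i z, I z -> exists r, a i * z = s * r) &
        \sum_(i < n) a i * y i = s].

Definition prufer (R : comNzRingType) : Prop :=
  forall I : R -> Prop, is_ideal I -> fin_gen I -> regular_ideal I ->
    invertible_ideal I.

(* Ideals packaged with a boolean carrier (needed to build the subring). *)
Record bideal (R : comNzRingType) := BIdeal {
  bideal_pred :> pred R;
  bideal_is_ideal : is_ideal (fun x => bideal_pred x) }.

(* Amalgamated algebra  A ⋈^f J = {(a, f a + j) : a in A, j in J}. *)
Section Amalgamation.
Variables (A B : comNzRingType) (f : {rmorphism A -> B}) (J : bideal B).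

Definition amal_pred : pred (A * B)%type := fun x => J (x.2 - f x.1).

Lemma amal_closed : subring_closed amal_pred.
Proof.
have [P0 PD PM] := bideal_is_ideal J.
have PN : forall x, J x -> J (- x).
  by move=> x Px; rewrite -mulN1r; apply: PM.
split; rewrite /amal_pred /=.
- rewrite unfold_in /= rmorph1 subrr; exact P0.
- move=> [x1 x2] [y1 y2]; rewrite !unfold_in /= => Hx Hy.
  have -> : x2 - y2 - f (x1 - y1) = (x2 - f x1) + - (y2 - f y1).
    by rewrite rmorphB !opprB addrACA [RHS]addrACA (addrC (- y2)).
  by apply: PD => //; apply: PN.
- move=> [x1 x2] [y1 y2]; rewrite !unfold_in /= => Hx Hy.
  have -> : x2 * y2 - f (x1 * y1) = y2 * (x2 - f x1) + f x1 * (y2 - f y1).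
    by rewrite rmorphM !mulrBr (mulrC y2 x2) (mulrC y2 (f x1)) addrA subrK.
  by apply: PD; apply: PM.
Qed.

HB.instance Definition _ :=
  GRing.isSubringClosed.Build (A * B)%type amal_pred amal_closed.

Record amalgam := Amalgam { amal_val :> (A * B)%type;
                            amal_valP : amal_val \in amal_pred }.
HB.instance Definition _ := [isSub for amal_val].
HB.instance Definition _ := [Choice of amalgam by <:].
HB.instance Definition _ := [SubChoice_isSubComNzRing of amalgam by <:].

End Amalgamation.

(* Main.v *)
Require Import Defs.
From HB Require Import structures.
From mathcomp Require Import all_boot all_order all_algebra.
From mathcomp Require Import boolp.
From mathcomp Require classical_sets.
Import GRing.Theory.
Local Open Scope ring_scope.

Definition unitp {S : comNzRingType} (x : S) := exists y, x * y = 1.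

Section Gen.
Variable S : comNzRingType.
Definition dvdr (x y : S) := exists c, y = x * c.
Definition Pprop := forall x y : S, regular x -> dvdr x y \/ dvdr y x.

Lemma reg_cancel (x y : S) : regular x -> x * y = 0 -> y = 0.
Proof.
move=> hx hxy; case: (eqVneq y 0) => // hy; exfalso; apply: hx; by exists y.
Qed.

Lemma reg_dvd (x y : S) : regular y -> dvdr x y -> regular x.
Proof.
move=> hy [c hc] [z [hz hxz]]; subst y; apply: hy; exists z; split => //.
by rewrite mulrAC hxz mul0r.
Qed.

Arguments reg_dvd {x y}.
Arguments reg_cancel {x y}.
Lemma dvdr_trans (x y z : S) : dvdr x y -> dvdr y z -> dvdr x z.
Proof. by move=> [c ->] [d ->]; exists (c * d); rewrite mulrA. Qed.

Arguments dvdr_trans {x y z}.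
Lemma dvdr_refl (x : S) : dvdr x x.
Proof. by exists 1; rewrite mulr1. Qed.

Lemma not_reg0 : ~ regular (0 : S).
Proof. by apply; exists 1; rewrite oner_neq0 mul0r. Qed.

Lemma P_to_prufer : Pprop -> prufer S.
Proof.
move=> hP I hI [n [g [Ig gen]]] [z [Iz rz]].
have key : forall k : nat, exists d, [/\ I d, regular d, dvdr d z &
    forall i : 'I_n, (i < k)%N -> dvdr d (g i)].
  elim=> [|k [d [Id rd dz dg]]].
    by exists z; split => //; apply: dvdr_refl.
  case: (ltnP k n) => hk; last first.
    exists d; split => // i hi; apply: dg; apply: (leq_trans (ltn_ord i) hk).
  pose i0 := Ordinal hk.
  case: (hP d (g i0) rd) => h.
    exists d; split => // i; rewrite ltnS leq_eqVlt => /orP[/eqP hi|hi]; last exact: dg.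
    by have -> : i = i0 by apply: val_inj.
  have rg := reg_dvd rd h.
  exists (g i0); split => //; first exact: (dvdr_trans h dz).
  move=> i; rewrite ltnS leq_eqVlt => /orP[/eqP hi|hi].
    have -> : i = i0 by apply: val_inj => /=; exact: hi.
    exact: dvdr_refl.
  exact: (dvdr_trans h (dg i hi)).
have [d [Id rd dz dg]] := key n.
have dI : forall x, I x -> exists r, 1 * x = d * r.
  move=> x /gen [c ->]; rewrite mul1r.
  have dg' : forall i : 'I_n, dvdr d (g i) by move=> i; apply: dg.
  have [e he] := choice dg'.
  exists (\sum_(i < n) c i * e i); rewrite mulr_sumr; apply: eq_bigr => i _.
  by rewrite he mulrCA.
exists d, 1%N, (fun _ => 1), (fun _ => d); split => //.
by rewrite big_ord1 mul1r.
Qed.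


Lemma unitpM (x y : S) : unitp (x * y) -> unitp x.
Proof. by move=> [z hz]; exists (y * z); rewrite mulrA. Qed.

Lemma unitp1 : unitp (1 : S).
Proof. by exists 1; rewrite mulr1. Qed.

Lemma not_unitp0 : ~ unitp (0 : S).
Proof. by move=> [z]; rewrite mul0r => /eqP; rewrite eq_sym oner_eq0. Qed.

Hypothesis hloc : forall x y : S, unitp (x + y) -> unitp x \/ unitp y.

Lemma unitp_sum n (r : 'I_n -> S) : unitp (\sum_(i < n) r i) -> exists i, unitp (r i).
Proof.
elim: n r => [|n IH] r; first by rewrite big_ord0 => /not_unitp0.
rewrite big_ord_recr /= => /hloc [/IH [i hi]|h].
  by exists (widen_ord (leqnSn n) i).
by exists ord_max.
Qed.

Lemma prufer_to_P : prufer S -> Pprop.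
Proof.
move=> hpr x y rx.
pose I := fun z : S => exists p q, z = p * x + q * y.
have hI : is_ideal I.
  split.
  - by exists 0, 0; rewrite !mul0r addr0.
  - move=> _ _ [p [q ->]] [p' [q' ->]]; exists (p + p'), (q + q').
    by rewrite !mulrDl addrACA.
  - move=> r _ [p [q ->]]; exists (r * p), (r * q).
    by rewrite mulrDr !mulrA.
have hfg : fin_gen I.
  exists 2%N, (fun i : 'I_2 => if val i == 0%N then x else y); split.
    by move=> i; case: ifP => _; [exists 1, 0 | exists 0, 1]; rewrite !mul1r !mul0r ?addr0 ?add0r.
  move=> _ [p [q ->]]; exists (fun i : 'I_2 => if val i == 0%N then p else q).
  by rewrite big_ord_recr big_ord1 /=.
have hreg : regular_ideal I.
  by exists x; split => //; exists 1, 0; rewrite mul1r mul0r addr0.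
have [s [n [a [yv [rs Iy ha hsum]]]]] := hpr I hI hfg hreg.
have hr : forall i, exists r, a i * yv i = s * r by move=> i; apply: ha.
have [r hrr] := choice hr.
have hsr : \sum_(i < n) r i = 1.
  apply/eqP; rewrite -subr_eq0; apply/eqP; apply: (reg_cancel rs).
  rewrite mulrBr mulr1 mulr_sumr -(eq_bigr _ (fun i _ => hrr i)) hsum subrr //.
have [k [w hw]] := unitp_sum n r (eq_ind_r unitp unitp1 hsr).
pose e := yv k.
have hdiv : forall z, I z -> dvdr e z.
  move=> z Iz; have [t ht] := ha k z Iz.
  have h1 : z * r k = t * e.
    apply/eqP; rewrite -subr_eq0; apply/eqP; apply: (reg_cancel rs).
    have h2 : s * (z * r k) = s * (t * e).
      by rewrite mulrCA -hrr /e mulrA (mulrC z) mulrAC ht -!mulrA.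
    by rewrite mulrBr h2 subrr.
  by exists (t * w); rewrite mulrA (mulrC e t) -h1 -mulrA hw mulr1.
have re : regular e.
  move=> [c [hc hec]]; move/negP: hc; apply; apply/eqP.
  have : r k * c = 0.
    apply: (reg_cancel rs); rewrite mulrA -hrr -mulrA.
    by rewrite /e in hec; rewrite hec mulr0.
  by move=> h0; rewrite -[c]mul1r -hw mulrAC h0 mul0r.
have Ie : I e by apply: Iy.
have [p [q hpq]] := Ie.
have Ix : I x by exists 1, 0; rewrite mul1r mul0r addr0.
have Iy' : I y by exists 0, 1; rewrite mul1r mul0r add0r.
have [u hu] := hdiv x Ix.
have [v hv] := hdiv y Iy'.
have h1 : u * p + v * q = 1.
  apply/eqP; rewrite -subr_eq0; apply/eqP; apply: (reg_cancel re).
  rewrite mulrBr mulr1 mulrDr !mulrA -hu -hv.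
  by rewrite [p * x]mulrC [q * y]mulrC in hpq; rewrite -hpq subrr.
have := hloc _ _ (eq_ind_r unitp unitp1 h1) => -[/unitpM [u' hu']|/unitpM [v' hv']].
  by left; exists (u' * v); rewrite hv hu -mulrA (mulrA u) hu' mul1r.
by right; exists (v' * u); rewrite hu hv -mulrA (mulrA v) hv' mul1r.
Qed.

End Gen.
Arguments reg_cancel {S x y}.
Arguments reg_dvd {S x y}.
Arguments dvdr_trans {S x y z}.
Arguments unitp1 {S}.

Arguments dvdr {S}.

Section Local.
Variables (A : comNzRingType) (m : A -> Prop).
Hypothesis hA : local_ring_with m.

Lemma ideal_mul (I : A -> Prop) r x : is_ideal I -> I x -> I (r * x).
Proof. by case=> _ _ h; apply: h. Qed.

Lemma local_nonunit (x : A) : ~ unitp x -> m x.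
Proof.
move=> nux.
pose P := fun X : A -> Prop => (forall t, ~ X t) \/ [/\ is_ideal X, ~ X 1 & X x].
have hch : forall F : (A -> Prop) -> Prop, classical_sets.subset F P ->
    classical_sets.total_on F classical_sets.subset ->
    P (classical_sets.bigcup F (fun X => X)).
  move=> F FP Ftot.
  case: (pselect (exists X t, F X /\ X t)) => [[X0 [t0 [FX0 X0t]]]|hn]; last first.
    by left => t [X FX Xt]; apply: hn; exists X, t.
  have ne : forall X t, F X -> X t -> [/\ is_ideal X, ~ X 1 & X x].
    move=> X t FX Xt; case: (FP X FX) => // h; by case: (h t).
  have [iX0 nX01 X0x] := ne X0 t0 FX0 X0t.
  right; split.
  - split.
    + by exists X0 => //; case: iX0.
    + move=> y z [X1 FX1 X1y] [X2 FX2 X2z].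
      case: (Ftot X1 X2 FX1 FX2) => h.
        exists X2 => //; have [[_ hd _] _ _] := ne X2 z FX2 X2z; apply: hd => //; exact: h.
      exists X1 => //; have [[_ hd _] _ _] := ne X1 y FX1 X1y; apply: hd => //; exact: h.
    + move=> r y [X1 FX1 X1y]; exists X1 => //.
      have [hi _ _] := ne X1 y FX1 X1y; exact: ideal_mul.
  - by move=> [X FX X1]; have [_ h _] := ne X 1 FX X1.
  - by exists X0.
have [A0 [PA0 maxA0]] := classical_sets.Zorn_bigcup hch.
pose B := fun t : A => exists r, t = r * x.
have iB : is_ideal B.
  split; first by exists 0; rewrite mul0r.
    by move=> _ _ [r ->] [s ->]; exists (r + s); rewrite mulrDl.
  by move=> r _ [s ->]; exists (r * s); rewrite mulrA.
have nB1 : ~ B 1 by move=> [r h]; apply: nux; exists r; rewrite mulrC -h.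
have Bx : B x by exists 1; rewrite mul1r.
case: PA0 => [emp|[iA0 nA01 A0x]].
  exfalso; apply: (maxA0 B).
    by split; [move=> t /emp | move=> h; apply: (emp x); apply: h].
  by right.
have mA0 : maximal_ideal A0.
  split => // I iI sub.
  case: (pselect (I 1)) => h1.
    by right => y; rewrite -[y]mulr1; apply: ideal_mul.
  case: (pselect (classical_sets.subset I A0)) => h2.
    by left => y; split; [apply: h2 | apply: sub].
  exfalso; apply: (maxA0 I); first by split.
  by right; split => //; apply: sub.
by have [_ h] := hA; apply/(h A0 mA0).
Qed.

Lemma local_m_nonunit (x : A) : m x -> ~ unitp x.
Proof.
move=> mx [y hy]; have [[iM nM1 _] _] := hA.
by apply: nM1; rewrite -hy mulrC; apply: ideal_mul.
Qed.

Lemma local_hloc (x y : A) : unitp (x + y) -> unitp x \/ unitp y.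
Proof.
move=> h; case: (pselect (unitp x)) => hx; first by left.
case: (pselect (unitp y)) => hy; first by right.
have : m (x + y).
  have [[[_ hd _] _ _] _] := hA; apply: hd; exact: local_nonunit.
by move/local_m_nonunit.
Qed.

End Local.
Arguments local_nonunit {A m}.
Arguments local_m_nonunit {A m}.
Arguments local_hloc {A m}.
Arguments ideal_mul {A}.

Section Amal.
Variables (A B : comNzRingType) (m : A -> Prop).
Hypothesis hA : local_ring_with m.
Variables (f : {rmorphism A -> B}) (J : bideal B).
Hypothesis hJproper : ~ J 1.
Hypothesis hJf : forall j, J j -> exists a : A, j = f a.
Hypothesis hReg : forall b : B, regular b <-> exists a : A, regular a /\ b = f a.

Local Notation R := (amalgam f J).
Definition mk (a : A) (b : B) (h : J (b - f a)) : R := @Amalgam _ _ f J (a, b) h.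
Arguments mk {a b}.

Lemma J0 : J 0. Proof. by case: (bideal_is_ideal J). Qed.
Lemma JD x y : J x -> J y -> J (x + y). Proof. by case: (bideal_is_ideal J) => _ h _; apply: h. Qed.
Lemma JM r x : J x -> J (r * x). Proof. by case: (bideal_is_ideal J) => _ _ h; apply: h. Qed.
Lemma JN x : J x -> J (- x). Proof. by move=> h; rewrite -mulN1r; apply: JM. Qed.

Lemma nm_unit (x : A) : ~ m x -> unitp x.
Proof. by move=> h; case: (pselect (unitp x)) => // /(local_nonunit hA). Qed.

Lemma mD x y : m x -> m y -> m (x + y).
Proof. by have [[[_ h _] _ _] _] := hA; apply: h. Qed.
Lemma mM r x : m x -> m (r * x).
Proof. by have [[[_ _ h] _ _] _] := hA; apply: h. Qed.

Lemma F1 j : J j -> exists k, j = f k /\ m k.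
Proof.
move=> Jj; have [k hk] := hJf _ Jj; exists k; split => //.
case: (pselect (m k)) => // /nm_unit [k' hk']; exfalso; apply: hJproper.
by rewrite -(rmorph1 f) -hk' rmorphM mulrC -hk; apply: JM.
Qed.

Lemma F2 a j : unitp a -> J j -> unitp (f a + j).
Proof.
move=> ua Jj; have [k [-> mk']] := F1 _ Jj.
have : ~ m (a + k).
  move=> h; apply: (local_m_nonunit hA a _ ua).
  by rewrite -(addrK k a); apply: mD => //; rewrite -mulN1r; apply: mM.
move/nm_unit => [w hw]; exists (f w); by rewrite -rmorphD -rmorphM hw rmorph1.
Qed.

Lemma F3 (u : R) : unitp (amal_val u).1 -> unitp u.
Proof.
case: u => [[a b] hu] /= [a' ha].
have Jd : J (b - f a) := hu.
have [b' hb] : unitp b by rewrite -(subrK (f a) b) addrC; apply: F2 => //; exists a'.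
have h : J (b' - f a').
  have -> : b' - f a' = b' * f a' * - (b - f a).
    rewrite opprB mulrBr -mulrA -rmorphM (mulrC a') ha rmorph1 mulr1.
    by rewrite mulrAC (mulrC b' b) hb mul1r.
  by apply: JM; apply: JN.
exists (mk h); apply: val_inj => /=.
by change ((a * a', b * b') = (1, 1)); rewrite ha hb.
Qed.

Lemma F4 (u v : R) : unitp (u + v) -> unitp u \/ unitp v.
Proof.
move=> [w hw].
have : unitp ((amal_val u).1 + (amal_val v).1).
  exists (amal_val w).1; have := congr1 (fun z : R => (amal_val z).1) hw; by [].
by case/(local_hloc hA) => h; [left|right]; apply: F3.
Qed.

Lemma F5 (u : R) : regular u -> regular (amal_val u).1.
Proof.
case: u => [[x1 x2] hu] /= ru [c [cne hc]]; apply: ru.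
have Jj : J (x2 - f x1) := hu.
case: (pselect (f c * (x2 - f x1) = 0)) => h0.
  have hz : J (f c - f c) by rewrite subrr; apply: J0.
  exists (mk hz); split.
    apply/negP => /eqP h; move/negP: cne; apply; apply/eqP.
    exact: (congr1 (fun z : R => (amal_val z).1) h).
  apply: val_inj => /=; congr pair => //.
  by rewrite -(subrK (f x1) x2) mulrDl -rmorphM hc rmorph0 addr0 mulrC.
have [k hk] := hJf _ Jj.
have hz : J (0 - f (c * k)) by rewrite sub0r rmorphM -hk; apply: JN; apply: JM.
exists (mk hz); split.
  apply/negP => /eqP h; apply: h0.
  have hck : c * k = 0 := congr1 (fun z : R => (amal_val z).1) h.
  by rewrite hk -rmorphM hck rmorph0.
apply: val_inj => /=; congr pair; last by rewrite mulr0.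
by rewrite mulrA hc mul0r.
Qed.

Lemma F6 (x : A) (h : J (f x - f x)) : regular x -> regular (mk h).
Proof.
move=> rx [[[c d] hz] [zne hc]].
have rfx : regular (f x) by apply/hReg; exists x.
move/negP: zne; apply; apply/eqP; apply: val_inj => /=.
have h1 := congr1 (fun z : R => (amal_val z).1) hc.
have h2 := congr1 (fun z : R => (amal_val z).2) hc.
simpl in h1, h2.
by rewrite (reg_cancel rx h1) (reg_cancel rfx h2).
Qed.

Lemma L (u v : R) :
  (forall j, J j -> exists j', J j' /\ j = f (amal_val u).1 * j') ->
  dvdr (amal_val u).1 (amal_val v).1 -> dvdr u v.
Proof.
case: u => [[x1 x2] hu]; case: v => [[y1 y2] hv] /= hJ [c hc].
have Jx : J (x2 - f x1) := hu.
have Jy : J (y2 - f y1) := hv.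
have [j1 [Jj1 hj1]] := hJ _ Jx.
have Jt : J ((y2 - f y1) - (x2 - f x1) * f c).
  by apply: JD => //; apply: JN; rewrite mulrC; apply: JM.
have [s1 [Js1 hs1]] := hJ _ Jt.
have [w hw] : unitp (1 + j1) by rewrite -(rmorph1 f); apply: F2 => //; exact: unitp1.
have he : J ((f c + w * s1) - f c) by rewrite addrC addKr; apply: JM.
exists (mk he); apply: val_inj => /=; congr pair => //.
have hx2 : x2 = f x1 * (1 + j1) by rewrite mulrDr mulr1 -hj1 addrC subrK.
rewrite mulrDr {2}hx2 -mulrA (mulrA (1 + j1)) hw mul1r -hs1.
rewrite hc rmorphM.
have -> : x2 * f c = f x1 * f c + (x2 - f x1) * f c by rewrite mulrBl addrC subrK.
by rewrite -(addrA y2) -opprD [RHS]addrC subrK.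
Qed.


Lemma Jff (x : A) : J (f x - f x).
Proof. by rewrite subrr; apply: J0. Qed.

Lemma proj1_dvd (u v : R) : dvdr u v -> dvdr (amal_val u).1 (amal_val v).1.
Proof.
move=> [c hc]; exists (amal_val c).1.
exact: (congr1 (fun z : R => (amal_val z).1) hc).
Qed.

Lemma main_fwd : prufer R ->
  (prufer A /\ forall a : A, m a -> regular a ->
     forall x : B, J x <-> exists j, J j /\ x = f a * j).
Proof.
move=> hpr; have hPR := @prufer_to_P R F4 hpr.
split.
  apply: P_to_prufer => x y rx.
  case: (hPR (mk (Jff x)) (mk (Jff y)) (F6 _ (Jff x) rx)) => /proj1_dvd h; by [left|right].
move=> a ma ra x; split; last first.
  by move=> [j [Jj ->]]; apply: JM.
move=> Jx.
have hx : J (x - f 0) by rewrite rmorph0 subr0.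
case: (hPR (mk (Jff a)) (mk hx) (F6 _ (Jff a) ra)) => -[[[c1 c2] hc] hcc].
  have h1 : 0 = a * c1 := congr1 (fun z : R => (amal_val z).1) hcc.
  have h2 : x = f a * c2 := congr1 (fun z : R => (amal_val z).2) hcc.
  have c10 : c1 = 0 by apply: (reg_cancel ra); rewrite -h1.
  exists c2; split => //.
  have : J (c2 - f c1) := hc.
  by rewrite c10 rmorph0 subr0.
have h1 : a = 0 * c1 := congr1 (fun z : R => (amal_val z).1) hcc.
by exfalso; apply: (@not_reg0 A); rewrite mul0r in h1; rewrite -h1.
Qed.

Lemma main_bwd : 
  (prufer A /\ forall a : A, m a -> regular a ->
     forall x : B, J x <-> exists j, J j /\ x = f a * j) -> prufer R.
Proof.
move=> [hprA hc]; have hPA := @prufer_to_P A (local_hloc hA) hprA.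
have G : forall a, regular a -> forall j, J j -> exists j', J j' /\ j = f a * j'.
  move=> a ra j Jj; case: (pselect (m a)) => ma.
    by apply/(hc a ma ra).
  have [a' ha'] := nm_unit _ ma.
  exists (f a' * j); split; first by apply: JM.
  by rewrite mulrA -rmorphM ha' rmorph1 mul1r.
apply: P_to_prufer => u v ru.
have rx1 := F5 _ ru.
case: (hPA _ (amal_val v).1 rx1) => h.
  by left; apply: L (G _ rx1) h.
by right; apply: L (G _ (reg_dvd rx1 h)) h.
Qed.

End Amal.

Theorem theorem2p2 (A B : comNzRingType) (m : A -> Prop)
  (hA : local_ring_with m)
  (f : {rmorphism A -> B}) (J : bideal B)
  (hJproper : ~ J 1)
  (hJrad : forall x, J x -> jacobson x)
  (hJf : forall j, J j -> exists a : A, j = f a)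
  (hReg : forall b : B, regular b <-> exists a : A, regular a /\ b = f a) :
  prufer (amalgam f J) <->
  (prufer A /\
   forall a : A, m a -> regular a ->
     forall x : B, J x <-> exists j, J j /\ x = f a * j).
Proof.
split; [exact: (@main_fwd A B m hA f J hJproper hJf hReg) | exact: (@main_bwd A B m hA f J hJproper hJf)].
Qed.
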